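(* Let $L>0$ be even, $A=\{x\in\{0,1\}^L: x_1+\dots+x_L=L/2\}$, $\mathrm{START}=(1,\dots,1,0,\dots,0)$ ($L/2$ ones followed by $L/2$ zeros) and $\mathrm{ACTIVE}=(0,\dots,0,1,\dots,1)$ ($L/2$ zeros followed by $L/2$ ones). There exist $\mu>0$ and a Boolean network with inputs $D$ with input vector $p=(p_1,\dots,p_L)$ and output vector $q=(q_1,q_2)$ such that the following holds for any initial condition of $D$ (at any initial time $\le 0$, with arbitrary inputs before time $0$). Let $M>1$ and let $p(0),\dots,p(M)$ be inputs with (i) $p(s)\in A$ for $0\le s\le M$, (ii) $p(0)=\mathrm{START}$, (iii) $p(s)\ne\mathrm{START}$ for $0<s\le M$. Let $j\ge0$ be such that $p(s)=\mathrm{ACTIVE}$ for $1\le s\le j$ and $p(j+1)\ne\mathrm{ACTIVE}$ (or $j=M$ if $p(1)=\dots=p(M)=\mathrm{ACTIVE}$). Then $q(s)=(1,0)$ for $\mu\le s\le\mu+j$ and $q(s)=(0,1)$ for $\mu+j<s\le\mu+M$. Moreover $D$ is cooperative, every node of its digraph has indegree and outdegree at most $2$, input variables have indegree $0$ and output variables have outdegree $0$. (The same holds after any time shift of the input sequence.)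
   Context: A Boolean network with inputs consists of finitely many Boolean variables, some designated as input variables whose values at each time are prescribed externally (arbitrarily), and the remaining (internal) variables, each updated simultaneously at each discrete time step by $x(t)=f_x(\text{values of all variables at time } t-1)$ for a Boolean function $f_x$; output variables are designated internal variables. It is cooperative if every update function $f_x$ is monotone nondecreasing with respect to the componentwise order (equivalently, expressible using only $\wedge$ and $\vee$). Its digraph has an arc from variable $y$ to internal variable $x$ iff $f_x$ actually depends on $y$. *)

(* Defs.v *)
From mathcomp Require Import all_boot.
Set Implicit Arguments. Unset Strict Implicit. Unset Printing Implicit Defensive.

(* Boolean network with L input variables ('I_L) and n internal variables ('I_n).
   A variable is either an input (inl i) or an internal variable (inr x). *)
Definition var (L n : nat) : finType := ('I_L + 'I_n)%type.

Definition state (L n : nat) := {ffun var L n -> bool}.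

Definition network (L n : nat) := 'I_n -> state L n -> bool.

Definition flip L n (s : state L n) (y : var L n) : state L n :=
  [ffun v => if v == y then ~~ s v else s v].

Definition depends L n (g : state L n -> bool) (y : var L n) : bool :=
  [exists s : state L n, g s != g (flip s y)].

Definition arc L n (f : network L n) (y : var L n) (x : 'I_n) : bool :=
  depends (f x) y.

(* indegree: inputs have no update function, hence indegree 0 *)
Definition indeg L n (f : network L n) (v : var L n) : nat :=
  match v with
  | inl _ => 0
  | inr x => #|[set y | arc f y x]|
  end.

Definition outdeg L n (f : network L n) (v : var L n) : nat :=
  #|[set x | arc f v x]|.

Definition cooperative L n (f : network L n) : Prop :=
  forall (x : 'I_n) (s s' : state L n),
    (forall v, s v ==> s' v) -> f x s ==> f x s'.

Definition full_state L n (p : {ffun 'I_L -> bool}) (x : {ffun 'I_n -> bool})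
  : state L n :=
  [ffun v => match v with inl i => p i | inr j => x j end].

Fixpoint traj L n (f : network L n) (p : nat -> {ffun 'I_L -> bool})
  (x0 : {ffun 'I_n -> bool}) (t : nat) : {ffun 'I_n -> bool} :=
  match t with
  | 0 => x0
  | t'.+1 => [ffun j => f j (full_state (p t') (traj f p x0 t'))]
  end.

Definition inA L (x : {ffun 'I_L -> bool}) : bool :=
  (\sum_(i < L) (x i : nat) == L %/ 2)%N.

Definition START L : {ffun 'I_L -> bool} := [ffun i : 'I_L => (i < L %/ 2)%N].
Definition ACTIVE L : {ffun 'I_L -> bool} := [ffun i : 'I_L => (L %/ 2 <= i)%N].

(* Main.v *)
Require Import Defs.
From mathcomp Require Import all_boot.
Set Implicit Arguments. Unset Strict Implicit. Unset Printing Implicit Defensive.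

Lemma sum_bool_compl n (F : 'I_n -> bool) :
  \sum_(k < n) (F k : nat) + \sum_(k < n) (~~ F k : nat) = n.
Proof.
rewrite -big_split /=.
rewrite (eq_bigr (fun _ => 1)) ?sum1_card ?card_ord // => i _.
by case: (F i).
Qed.

Lemma sum_bool_all n (F : 'I_n -> bool) :
  (\sum_(k < n) (F k : nat) == n) = [forall k, F k].
Proof.
have E := sum_bool_compl F.
have -> : (\sum_(k < n) (F k : nat) == n) = (\sum_(k < n) (~~ F k : nat) == 0).
  move: E; set a := \sum_(k < n) (F k : nat); set b := \sum_(k < n) _ => E.
  by rewrite -E -{1}[a]addn0 eqn_add2l eq_sym.
rewrite sum_nat_eq0; apply/forallP/forallP => H k; move: (H k) => /=; by case: (F k).
Qed.

Lemma sum_bool_ex n (F : 'I_n -> bool) :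
  (0 < \sum_(k < n) (F k : nat)) = [exists k, F k].
Proof.
rewrite lt0n sum_nat_eq0; apply/idP/idP.
- rewrite negb_forall => /existsP [k Hk]; apply/existsP; exists k.
  by move: Hk; case: (F k).
- move=> /existsP [k Hk]; apply/negP => /forallP /(_ k) /=; by rewrite Hk.
Qed.

Lemma add_eq_l a b : a + b = a -> b = 0.
Proof. by move/eqP; rewrite -{2}[a]addn0 eqn_add2l => /eqP. Qed.
Lemma add_eq_r a b : a + b = b -> a = 0.
Proof. by rewrite addnC; apply: add_eq_l. Qed.

Section A.
Variable H : nat.
Local Notation L := (H + H).

Lemma half_L : L %/ 2 = H.
Proof. by rewrite addnn divn2 doubleK. Qed.

Lemma sum_L (q : {ffun 'I_L -> bool}) :
  \sum_(i < L) (q i : nat) = \sum_(k < H) (q (lshift H k) : nat) + \sum_(k < H) (q (rshift H k) : nat).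
Proof. by rewrite big_split_ord. Qed.

Lemma eq_half (q : {ffun 'I_L -> bool}) :
  (q == START L) = [forall k, q (lshift H k)] && [forall k, ~~ q (rshift H k)].
Proof.
apply/eqP/andP.
- move=> ->; rewrite /START half_L; split; apply/forallP => k; rewrite ffunE /=.
  + by rewrite ltn_ord.
  + by rewrite -ltnNge leq_addr.
- move=> [/forallP H1 /forallP H2]; apply/ffunP => i; rewrite /START ffunE half_L.
  rewrite -(splitK i); case: (split i) => k /=.
  + by rewrite H1 /= ltn_ord.
  + by rewrite /= ltnNge leq_addr /=; apply/negbTE/H2.
Qed.

Lemma eq_halfA (q : {ffun 'I_L -> bool}) :
  (q == ACTIVE L) = [forall k, ~~ q (lshift H k)] && [forall k, q (rshift H k)].
Proof.
apply/eqP/andP.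
- move=> ->; rewrite /ACTIVE half_L; split; apply/forallP => k; rewrite ffunE /=.
  + by rewrite -ltnNge ltn_ord.
  + by rewrite leq_addr.
- move=> [/forallP H1 /forallP H2]; apply/ffunP => i; rewrite /ACTIVE ffunE half_L.
  rewrite -(splitK i); case: (split i) => k /=.
  + by rewrite /= leqNgt ltn_ord; apply/negbTE/H1.
  + by rewrite /= leq_addr H2.
Qed.

Lemma notall_compl (F : 'I_H -> bool) :
  [forall k, ~~ F k] = ~~ [exists k, F k].
Proof. by rewrite negb_exists. Qed.

Lemma inA_fst (q : {ffun 'I_L -> bool}) : inA q ->
  [forall k, q (lshift H k)] = (q == START L).
Proof.
rewrite /inA half_L sum_L => /eqP E; rewrite eq_half.
case F1: [forall k, q (lshift H k)] => //=.
move: F1; rewrite -sum_bool_all => /eqP F1; move: E; rewrite F1.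
move/add_eq_l => S0.
rewrite notall_compl -sum_bool_ex S0 //.
Qed.

Lemma inA_snd (q : {ffun 'I_L -> bool}) : inA q ->
  [forall k, q (rshift H k)] = (q == ACTIVE L).
Proof.
rewrite /inA half_L sum_L => /eqP E; rewrite eq_halfA.
case F1: [forall k, q (rshift H k)]; rewrite ?andbF ?andbT //.
move: F1; rewrite -sum_bool_all => /eqP F1; move: E; rewrite F1.
move/add_eq_r => S0.
rewrite notall_compl -sum_bool_ex S0 //.
Qed.

Lemma inA_ex_snd (q : {ffun 'I_L -> bool}) : inA q ->
  [exists k, q (rshift H k)] = ~~ (q == START L).
Proof.
move=> hA; rewrite -inA_fst //; move: hA.
rewrite /inA half_L sum_L => /eqP E.
rewrite -sum_bool_all -sum_bool_ex; apply/idP/idP.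
- move=> P; apply/negP => /eqP E1; move: E; rewrite E1 => /add_eq_l E2.
  by rewrite E2 in P.
- move=> N; rewrite lt0n; apply/negP => /eqP E2; move: E; rewrite E2 addn0 => E.
  by rewrite E eqxx in N.
Qed.

Lemma inA_ex_fst (q : {ffun 'I_L -> bool}) : inA q ->
  [exists k, q (lshift H k)] = ~~ (q == ACTIVE L).
Proof.
move=> hA; rewrite -inA_snd //; move: hA.
rewrite /inA half_L sum_L => /eqP E.
rewrite -sum_bool_all -sum_bool_ex; apply/idP/idP.
- move=> P; apply/negP => /eqP E1; move: E; rewrite E1 => /add_eq_r E2.
  by rewrite E2 in P.
- move=> N; rewrite lt0n; apply/negP => /eqP E2; move: E; rewrite E2 add0n => E.
  by rewrite E eqxx in N.
Qed.
End A.

Definition opf (o x y : bool) := if o then x && y else x || y.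

Definition cons_c (g : nat) : seq nat :=
  match g with
  | 0 => [:: 4; 10] | 1 => [:: 2; 3] | 2 => [:: 10] | 3 => [:: 9]
  | 4 => [:: 5] | 5 => [:: 6] | 6 => [:: 14] | 7 => [:: 8] | 8 => [:: 9]
  | 9 => [:: 12] | 10 => [:: 11] | 11 => [:: 12] | 12 => [:: 11; 13]
  | 13 => [:: 14; 15] | 14 => [:: 15] | _ => [::]
  end.

Lemma size_cons_c g : size (cons_c g) <= 2.
Proof. by do 16! (case: g => [//|g]). Qed.

Section Net.
Variable h' : nat.
Local Notation H := h'.+1.
Local Notation L := (H + H).

Definition node : finType := ((bool * bool * 'I_H * 'I_H) + (bool * 'I_16))%type.
Definition Tn fh op (l i : 'I_H) : node := inl (fh, op, l, i).
Definition Cn b (g : 'I_16) : node := inr (b, g).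
Definition src := ('I_L + node)%type.

Definition inp (fh : bool) (i : 'I_H) : 'I_L := if fh then lshift H i else rshift H i.
Definition rootX b : node := Tn b b ord_max ord0.
Definition rootY b : node := Tn (~~ b) b ord_max ord0.

Definition cgate (b : bool) (g : nat) : bool * src * src :=
  let C k := (inr (Cn b (inord k)) : src) in
  match g with
  | 0 | 1 => (true, inr (rootX b), inr (rootX b))
  | 2 | 3 => (true, C 1, C 1)
  | 4 => (true, C 0, C 0)
  | 5 => (true, C 4, C 4)
  | 6 => (true, C 5, C 5)
  | 7 => (true, inr (rootY b), inr (rootY b))
  | 8 => (true, C 7, C 7)
  | 9 => (~~ b, C 3, C 8)
  | 10 => (~~ b, C 0, C 2)
  | 11 => (~~ b, C 10, C 12)
  | 12 => (b, C 11, C 9)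
  | 13 => (true, C 12, C 12)
  | 14 => (~~ b, C 13, C 6)
  | _ => (b, C 13, C 14)
  end.

Definition gate (x : node) : bool * src * src :=
  match x with
  | inl (fh, op, l, i) =>
     if val l is l'.+1 then
       (op, inr (Tn fh op (inord l') i), inr (Tn fh op (inord l') (inord (minn i.+1 h'))))
     else (op, inl (inp fh i), inl (inp fh i))
  | inr (b, g) => cgate b (val g)
  end.

Definition cons_node (x : node) : seq node :=
  match x with
  | inl (fh, op, l, i) =>
     if l < h' then Tn fh op (inord l.+1) i ::
                    (if 0 < i then [:: Tn fh op (inord l.+1) (inord i.-1)] else [::])
     else if (i == 0 :> nat) then
            (if fh == op then [:: Cn op (inord 0); Cn op (inord 1)] else [:: Cn op (inord 7)])
          else [::]
  | inr (b, g) => map (fun k => Cn b (inord k)) (cons_c g)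
  end.

Definition cons_src (y : src) : seq node :=
  match y with
  | inl k => match split k with
             | inl i => [:: Tn true true ord0 i; Tn true false ord0 i]
             | inr i => [:: Tn false true ord0 i; Tn false false ord0 i]
             end
  | inr x => cons_node x
  end.

Lemma size_cons y : size (cons_src y) <= 2.
Proof.
case: y => [k|[[[[fh op] l] i]|[b g]]] /=.
- by case: (split k).
- case: ifP => _; first by case: ifP.
  by case: ifP => _ //; case: ifP.
- by rewrite size_map size_cons_c.
Qed.

Lemma split_l (i : 'I_H) : split (lshift H i) = inl i.
Proof. by rewrite -[lshift H i]/(unsplit (inl i)) unsplitK. Qed.
Lemma split_r (i : 'I_H) : split (rshift H i) = inr i.
Proof. by rewrite -[rshift H i]/(unsplit (inr i)) unsplitK. Qed.

Lemma Tn_eq fh op l i fh' op' l' i' :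
  (Tn fh op l i == Tn fh' op' l' i') = [&& fh == fh', op == op', l == l' & i == i'].
Proof. by rewrite /Tn; apply/eqP/and4P => [[-> -> -> ->]|[/eqP-> /eqP-> /eqP-> /eqP->]]. Qed.

Lemma memC b (g : nat) s : g < 16 -> g \in s ->
  Cn b (inord g) \in map (fun k => Cn b (inord k)) s.
Proof. by move=> _ Hs; apply/mapP; exists g. Qed.
Lemma consC b k : k < 16 -> cons_src (inr (Cn b (inord k))) = map (fun k => Cn b (inord k)) (cons_c k).
Proof. by move=> Hk /=; rewrite inordK. Qed.
Lemma consX b : cons_src (inr (rootX b)) = [:: Cn b (inord 0); Cn b (inord 1)].
Proof. by rewrite /= ltnn eqxx. Qed.
Lemma consY b : cons_src (inr (rootY b)) = [:: Cn b (inord 7)].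
Proof. by rewrite /= ltnn; case: b. Qed.

Lemma gate_cons x : let: (o, y1, y2) := gate x in x \in cons_src y1 /\ x \in cons_src y2.
Proof.
case: x => [[[[fh op] l] i]|[b g]].
- rewrite /gate; case: l => [[|l'] Hl] /=.
  + have E : Ordinal Hl = ord0 by apply: val_inj.
    rewrite /inp E; case: fh => /=; rewrite ?split_l ?split_r;
    by case: op; rewrite !in_cons eqxx ?orbT.
  + have Hl' : l' < h' by [].
    rewrite inordK ?(ltnW Hl) // Hl' /=.
    have E : inord l'.+1 = Ordinal Hl by apply: val_inj; rewrite /= inordK.
    rewrite /Tn E; split; first by rewrite in_cons eqxx.
    rewrite inordK; last by rewrite ltnS geq_minr.
    case: (ltnP i h') => Hi.
    * rewrite (minn_idPl Hi) /= !in_cons.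
      have -> : inord (i.+1).-1 = i by apply: val_inj; rewrite /= inordK.
      by rewrite eqxx orbT.
    * have Ei : minn i.+1 h' = i.
        by rewrite (minn_idPr (leqW Hi)); apply/eqP; rewrite eqn_leq Hi -ltnS ltn_ord.
      by rewrite Ei in_cons -[inord i]/(inord (val i)) inord_val eqxx.
- case: g => g Hg /=.
  have -> : Ordinal Hg = inord g by apply: val_inj; rewrite /= inordK.
  rewrite -[inr (b, inord g)]/(Cn b (inord g)).
  do 16! (case: g Hg => [|g] Hg; first by
    split; rewrite ?consC ?consX ?consY //;
    first [apply: memC => // | by rewrite !in_cons eqxx ?orbT]).
  by [].
Qed.

Definition nn := #|node|.
Definition tr (y : src) : var L nn :=
  match y with inl k => inl k | inr x => inr (enum_rank x) end.
Definition untr (v : var L nn) : src :=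
  match v with inl k => inl k | inr x => inr (enum_val x) end.
Lemma trK v : tr (untr v) = v.
Proof. by case: v => [k|x] //=; rewrite enum_valK. Qed.
Lemma untrK y : untr (tr y) = y.
Proof. by case: y => [k|x] //=; rewrite enum_rankK. Qed.

Definition net : network L nn := fun x s =>
  let: (o, y1, y2) := gate (enum_val x) in opf o (s (tr y1)) (s (tr y2)).

Lemma depends_op (g : state L nn -> bool) o y1 y2 y :
  (forall s, g s = opf o (s y1) (s y2)) -> depends g y -> (y == y1) || (y == y2).
Proof.
move=> Hg /existsP [s]; rewrite !Hg /flip !ffunE.
case: (y =P y1) => [E1|N1]; first by move=> _; apply/orP; left; apply/eqP.
case: (y =P y2) => [E2|N2]; first by move=> _; apply/orP; right; apply/eqP.
have -> : (y1 == y) = false by apply/eqP => E; apply: N1.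
have -> : (y2 == y) = false by apply/eqP => E; apply: N2.
by move/negP.
Qed.

Lemma arc_src (v : var L nn) (x : 'I_nn) : let: (o, y1, y2) := gate (enum_val x) in
  Defs.arc net v x -> (v == tr y1) || (v == tr y2).
Proof.
case E: (gate (enum_val x)) => [[o y1] y2]; rewrite /Defs.arc.
by apply: depends_op => s; rewrite /net E.
Qed.

Lemma net_indeg (v : var L nn) : indeg net v <= 2.
Proof.
case: v => [//|x] /=.
have := arc_src^~ x; case E: (gate (enum_val x)) => [[o y1] y2] Ha.
apply: leq_trans (subset_leq_card (_ : [set y | Defs.arc net y x] \subset [set tr y1; tr y2])) _.
- by apply/subsetP => y; rewrite !inE => /Ha.
- by rewrite cards2; case: (_ != _).
Qed.

Lemma net_outdeg_sub (v : var L nn) : [set x | Defs.arc net v x] \subset [set x in map enum_rank (cons_src (untr v))].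
Proof.
apply/subsetP => x; rewrite !inE.
have := arc_src v x; have := gate_cons (enum_val x).
case: (gate (enum_val x)) => [[o y1] y2] [G1 G2] Ha /Ha /orP [] /eqP ->; rewrite untrK;
by rewrite -[x]enum_valK; apply: map_f.
Qed.

Lemma net_outdeg (v : var L nn) : outdeg net v <= 2.
Proof.
rewrite /outdeg; apply: leq_trans (subset_leq_card (net_outdeg_sub v)) _.
rewrite cardsE; apply: leq_trans (card_size _) _.
by rewrite size_map size_cons.
Qed.

Lemma net_coop : cooperative net.
Proof.
move=> x s s' Hs; rewrite /net; case: (gate (enum_val x)) => [[o y1] y2].
move: (Hs (tr y1)) (Hs (tr y2)); rewrite /opf.
by case: o; case: (s (tr y1)); case: (s (tr y2)); case: (s' (tr y1)); case: (s' (tr y2)).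
Qed.

Lemma net_out0 b : outdeg net (inr (enum_rank (Cn b (inord 15)))) = 0.
Proof.
apply/eqP; rewrite -leqn0; apply: leq_trans (subset_leq_card (net_outdeg_sub _)) _.
rewrite /= enum_rankK /Cn /= inordK //= cardsE.
exact: (leq_trans (card_size _)).
Qed.
End Net.

From Stdlib Require Import Lia.
Ltac nlia := rewrite -?plusE; repeat (case: leP => ? /=); try done; try (exfalso; lia).

Section Dyn.
Variable h' : nat.
Local Notation H := h'.+1.
Local Notation L := (H + H).
Variable p : nat -> {ffun 'I_L -> bool}.
Variable x0 : {ffun 'I_(nn h') -> bool}.

Definition vl t (z : node h') := traj (net (h':=h')) p x0 t (enum_rank z).
Definition sv t (y : src h') := match y with inl k => p t k | inr z => vl t z end.

Lemma step t z : vl t.+1 z = let: (o, y1, y2) := gate z in opf o (sv t y1) (sv t y2).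
Proof.
rewrite /vl /= ffunE /net enum_rankK.
by case: (gate z) => [[o [k1|z1]] [k2|z2]]; rewrite /full_state !ffunE.
Qed.

Definition den fh op l (i : 'I_H) (q : {ffun 'I_L -> bool}) :=
  if op then [forall k : 'I_H, (i <= k <= i + l) ==> q (inp fh k)]
  else [exists k : 'I_H, (i <= k <= i + l) && q (inp fh k)].

Lemma den0 fh op i q : den fh op 0 i q = q (inp fh i).
Proof.
rewrite /den addn0; case: op.
- apply/forallP/idP => [/(_ i)|Hq k]; first by rewrite leqnn.
  apply/implyP => Hk; have -> : k = i by apply: val_inj; apply/eqP; rewrite eqn_leq andbC.
  done.
- apply/existsP/idP => [[k /andP [Hk Hq]]|Hq]; last by exists i; rewrite leqnn.
  by have <- : k = i by apply: val_inj; apply/eqP; rewrite eqn_leq andbC.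
Qed.

Lemma denS fh op l (i : 'I_H) q :
  den fh op l.+1 i q = opf op (den fh op l i q) (den fh op l (inord (minn i.+1 h')) q).
Proof.
have R : forall k : 'I_H, (i <= k <= i + l.+1) =
   (i <= k <= i + l) || ((inord (minn i.+1 h') : 'I_H) <= k <= (inord (minn i.+1 h') : 'I_H) + l).
  move=> k; rewrite inordK; last by rewrite ltnS geq_minr.
  have Hk := ltn_ord k; have Hi := ltn_ord i.
  case: (ltnP i h') => Hi'.
  + rewrite (minn_idPl Hi'); clear Hk Hi; nlia.
  + rewrite (minn_idPr (leqW Hi')); move: Hk Hi Hi' => /leP Hk /leP Hi /leP Hi'; nlia.
rewrite /den /opf; case: op.
- apply/idP/idP.
  + move/forallP => Hk; apply/andP; split; apply/forallP => k; apply/implyP => Hr;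
    by apply: (implyP (Hk k)); rewrite R Hr ?orbT.
  + move/andP => [/forallP H1 /forallP H2]; apply/forallP => k; rewrite R;
    apply/implyP => /orP [] Hr; [exact: (implyP (H1 k)) | exact: (implyP (H2 k))].
- apply/idP/idP.
  + move/existsP => [k /andP [Hr Hq]]; move: Hr; rewrite R => /orP [] Hr; apply/orP;
    [left|right]; apply/existsP; exists k; by rewrite Hr.
  + move/orP => [] /existsP [k /andP [Hr Hq]]; apply/existsP; exists k; by rewrite R Hr ?orbT.
Qed.

Lemma tree_val fh op l (Hl : l < H) i t :
  vl (t + l.+1) (Tn fh op (Ordinal Hl) i) = den fh op l i (p t).
Proof.
elim: l Hl i => [|l IH] Hl i.
- by rewrite addn1 step /= den0; case: op; rewrite /opf ?andbb ?orbb.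
- rewrite addnS step /= denS.
  have E : inord l = Ordinal (ltnW Hl) by apply: val_inj; rewrite /= inordK ?(ltnW Hl).
  by rewrite E !IH.
Qed.

Lemma root_val fh op t :
  vl (t + H) (Tn fh op ord_max ord0) =
  if op then [forall k, p t (inp fh k)] else [exists k, p t (inp fh k)].
Proof.
have -> : (ord_max : 'I_H) = Ordinal (ltnSn h') by apply: val_inj.
rewrite tree_val /den; case: op.
- by apply/forallP/forallP => Hk k; move: (Hk k); rewrite /= add0n -ltnS ltn_ord.
- by apply/existsP/existsP => [[k Hk]|[k Hk]]; exists k; move: Hk; rewrite /= add0n -ltnS ltn_ord.
Qed.
End Dyn.

Lemma latch (W : nat -> nat -> bool) (Xr Yr s a : nat -> bool) (B M j : nat) :
  (forall t, W t.+1 0 = Xr t) ->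
  (forall t, W t.+1 1 = Xr t) ->
  (forall t, W t.+1 2 = W t 1) ->
  (forall t, W t.+1 3 = W t 1) ->
  (forall t, W t.+1 4 = W t 0) ->
  (forall t, W t.+1 5 = W t 4) ->
  (forall t, W t.+1 6 = W t 5) ->
  (forall t, W t.+1 7 = Yr t) ->
  (forall t, W t.+1 8 = W t 7) ->
  (forall t, W t.+1 9 = W t 3 || W t 8) ->
  (forall t, W t.+1 10 = W t 0 || W t 2) ->
  (forall t, W t.+1 11 = W t 10 || W t 12) ->
  (forall t, W t.+1 12 = W t 11 && W t 9) ->
  (forall t, W t.+1 13 = W t 12) ->
  (forall t, W t.+1 14 = W t 13 || W t 6) ->
  (forall t, W t.+1 15 = W t 13 && W t 14) ->
  (forall k, k <= M -> Xr (B + k) = s k) ->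
  (forall k, k <= M -> Yr (B + k) = a k) ->
  s 0 = true -> (forall k, 0 < k <= M -> s k = false) ->
  (forall k, 0 < k <= j -> a k = true) -> (j < M -> a j.+1 = false) -> j <= M ->
  forall k, k <= M -> W (B + k).+4.+2 15 = (k <= j).
Proof.
move=> w0 w1 w2 w3 w4 w5 w6 w7 w8 w9 w10 w11 w12 w13 w14 w15 hX hY hs0 hs ha haj hj.
have f0 k : k <= M -> W (B + k).+1 0 = s k by move=> Hk; rewrite w0 hX.
have f1 k : k <= M -> W (B + k).+1 1 = s k by move=> Hk; rewrite w1 hX.
have f2 k : k <= M -> W (B + k).+2 2 = s k by move=> Hk; rewrite w2 f1.
have f3 k : k <= M -> W (B + k).+2 3 = s k by move=> Hk; rewrite w3 f1.
have f4 k : k <= M -> W (B + k).+2 4 = s k by move=> Hk; rewrite w4 f0.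
have f5 k : k <= M -> W (B + k).+3 5 = s k by move=> Hk; rewrite w5 f4.
have f6 k : k <= M -> W (B + k).+4 6 = s k by move=> Hk; rewrite w6 f5.
have f7 k : k <= M -> W (B + k).+1 7 = a k by move=> Hk; rewrite w7 hY.
have f8 k : k <= M -> W (B + k).+2 8 = a k by move=> Hk; rewrite w8 f7.
have f9 k : k <= M -> W (B + k).+3 9 = s k || a k by move=> Hk; rewrite w9 f3 // f8.
have f10 k : k < M -> W (B + k).+3 10 = s k.+1 || s k.
  by move=> Hk; rewrite w10 f2 ?(ltnW Hk) // -addnS f0.
have f10' : W B.+2 10 = true.
  by rewrite w10 -[B]addn0 f0 ?hs0.
set mm := fun k => W (B + k).+4 12.
have mE k : k <= M -> mm k = (W (B + k).+2 10 || W (B + k).+2 12) && (s k || a k).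
  by move=> Hk; rewrite /mm w12 w11 f9.
have m0 : mm 0 = true by rewrite mE // addn0 f10' hs0.
have m1 : 0 < M -> mm 1 = a 1.
  move=> HM; rewrite mE // addn1; have := f10 0 HM; rewrite addn0 => ->.
  by rewrite hs0 orbT /= hs ?HM.
have mS k : k.+2 <= M -> mm k.+2 = mm k && a k.+2.
  move=> Hk; rewrite mE // !addnS.
  have -> : W (B + k).+4 10 = false.
    have := f10 k.+1 Hk; rewrite addnS => ->.
    by rewrite !hs //= (ltn_trans (ltnSn _) Hk).
  by rewrite /= (hs k.+2) //= andbC.
have pair k : 0 < k <= M -> (mm k && mm k.-1) = (k <= j).
  elim: k => [//|k IH] /andP [_ Hk].
  case: k IH Hk => [|k] IH Hk.
  + rewrite m1 // m0 andbT.
    case: (ltnP 0 j) => Hj; first by rewrite ha ?Hj.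
    have j0 : j = 0 by apply/eqP; rewrite -leqn0.
    by move: haj; rewrite j0 => -> //.
  + rewrite mS // /= andbC andbA IH ?(ltnW Hk) //=.
    case: (ltngtP k.+1 j) => Hkj.
    * by rewrite ha // Hkj.
    * by [].
    * by rewrite /= Hkj haj // -Hkj.
move=> k Hk.
rewrite w15 w13 w14 w13 f6 //.
case: k Hk => [|k] Hk.
- by rewrite addn0 hs0 orbT andbT; move: m0; rewrite /mm addn0.
- have -> : W (B + k.+1).+3 12 = mm k by rewrite /mm addnS.
  by rewrite hs //= orbF -(pair k.+1) // /mm.
Qed.

Definition nu (b z : bool) := if b then z else ~~ z.

Definition cform (g : nat) (w : nat -> bool) (x y : bool) : bool :=
  match g with
  | 0 | 1 => x | 2 | 3 => w 1 | 4 => w 0 | 5 => w 4 | 6 => w 5 | 7 => y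
  | 8 => w 7 | 9 => w 3 || w 8 | 10 => w 0 || w 2 | 11 => w 10 || w 12
  | 12 => w 11 && w 9 | 13 => w 12 | 14 => w 13 || w 6 | _ => w 13 && w 14
  end.

Lemma cstep h' p x0 b t g : g < 16 ->
  nu b (vl p x0 t.+1 (Cn h' b (inord g))) =
  cform g (fun k => nu b (vl p x0 t (Cn h' b (inord k))))
          (nu b (vl p x0 t (rootX h' b))) (nu b (vl p x0 t (rootY h' b))).
Proof.
move=> Hg; rewrite step /Cn /= inordK //.
by do 16! (case: g Hg => [|g] Hg; first by case: b; rewrite /nu /opf /= ?andbb ?orbb ?negb_and ?negb_or).
Qed.

Lemma rootX_val h' p x0 b t : inA (p t) ->
  nu b (vl p x0 (t + h'.+1) (rootX h' b)) = (p t == START (h'.+1 + h'.+1)).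
Proof.
move=> hA; rewrite /rootX root_val; case: b => /=.
- by rewrite /inp inA_fst.
- by rewrite /inp inA_ex_snd // negbK.
Qed.

Lemma rootY_val h' p x0 b t : inA (p t) ->
  nu b (vl p x0 (t + h'.+1) (rootY h' b)) = (p t == ACTIVE (h'.+1 + h'.+1)).
Proof.
move=> hA; rewrite /rootY root_val; case: b => /=.
- by rewrite /inp inA_snd.
- by rewrite /inp inA_ex_fst // negbK.
Qed.

Theorem lemma6 (L : nat) (HL : 0 < L) (Heven : ~~ odd L) :
  exists (mu n : nat) (f : network L n) (q1 q2 : 'I_n),
    0 < mu /\
    cooperative f /\
    (forall v : var L n, indeg f v <= 2 /\ outdeg f v <= 2) /\
    (forall i : 'I_L, indeg f (inl i) = 0) /\
    outdeg f (inr q1) = 0 /\ outdeg f (inr q2) = 0 /\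
    forall (x0 : {ffun 'I_n -> bool}) (p : nat -> {ffun 'I_L -> bool})
           (T M : nat),
      1 < M ->
      (forall s, s <= M -> inA (p (T + s))) ->
      p T = START L ->
      (forall s, 0 < s <= M -> p (T + s) <> START L) ->
      forall j : nat, j <= M ->
        (forall s, 1 <= s <= j -> p (T + s) = ACTIVE L) ->
        (j < M -> p (T + j.+1) <> ACTIVE L) ->
        (forall s, mu <= s <= mu + j ->
           traj f p x0 (T + s) q1 = true /\ traj f p x0 (T + s) q2 = false) /\
        (forall s, mu + j < s <= mu + M ->
           traj f p x0 (T + s) q1 = false /\ traj f p x0 (T + s) q2 = true).
Proof.
have [h' EL] : exists h', L = h'.+1 + h'.+1.
  exists (L./2).-1.
  have E2 : L./2.*2 = L by move: (odd_double_half L); rewrite (negbTE Heven) add0n.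
  have Hp : 0 < L./2 by rewrite lt0n; apply/negP => /eqP E0; move: E2 HL; rewrite E0 => <-.
  by rewrite prednK // addnn.
subst L.
exists (h'.+1 + 6), (nn h'), (net (h':=h')), (enum_rank (Cn h' true (inord 15))),
  (enum_rank (Cn h' false (inord 15))).
split; first by rewrite addnS.
split; first exact: net_coop.
split; first by move=> v; rewrite net_indeg net_outdeg.
split; first by [].
split; first exact: net_out0.
split; first exact: net_out0.
move=> x0 p T M HM hA hS hnS j hj hact hnact.
have key : forall b k, k <= M ->
    nu b (vl p x0 (T + h'.+1 + k).+4.+2 (Cn h' b (inord 15))) = (k <= j).
  move=> b.
  apply: (@latch (fun t g => nu b (vl p x0 t (Cn h' b (inord g))))
             (fun t => nu b (vl p x0 t (rootX h' b)))
             (fun t => nu b (vl p x0 t (rootY h' b)))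
             (fun k => p (T + k) == START _) (fun k => p (T + k) == ACTIVE _) (T + h'.+1) M j);
    try (by move=> t; rewrite /= cstep).
  - by move=> k Hk; rewrite /= addnAC rootX_val // hA.
  - by move=> k Hk; rewrite /= addnAC rootY_val // hA.
  - by rewrite /= addn0 hS eqxx.
  - by move=> k Hk; apply/eqP; apply: hnS.
  - by move=> k Hk; apply/eqP; apply: hact.
  - by move=> Hj; apply/eqP; apply: hnact.
  - exact: hj.
have tE : forall s, h'.+1 + 6 <= s -> T + s = (T + h'.+1 + (s - (h'.+1 + 6))).+4.+2.
  move=> s Hs; move: (subnKC Hs); set d := s - _ => Es.
  rewrite -Es -!plusE; lia.
split => s /andP [H1 H2].
- have Hk : s - (h'.+1 + 6) <= j by rewrite leq_subLR.
  have HkM : s - (h'.+1 + 6) <= M by apply: leq_trans Hk hj.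
  rewrite tE //; split.
  + by move: (key true _ HkM); rewrite Hk.
  + by move: (key false _ HkM); rewrite Hk /nu => /negbTE.
- have H1' : h'.+1 + 6 <= s by apply: leq_trans (leq_addr j _) (ltnW H1).
  have Hk : j < s - (h'.+1 + 6) by rewrite ltn_subRL.
  have HkM : s - (h'.+1 + 6) <= M by rewrite leq_subLR.
  rewrite tE //; split.
  + by move: (key true _ HkM); rewrite leqNgt Hk.
  + by move: (key false _ HkM); rewrite leqNgt Hk /nu => /negbFE.
Qed.
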